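(* Let $H$ be a connected triangle-free graph and $G=L(H)$. Then $G$ is localizable if and only if $H$ is an equimatchable bipartite graph.
   Context: $L(H)$ is the line graph of $H$. A clique is strong if it intersects every maximal independent set; a graph is localizable if its vertex set admits a partition into strong cliques. A graph is equimatchable if all its maximal matchings have the same size. *)

(* Defs.v *)
From mathcomp Require Import all_boot.
Set Implicit Arguments. Unset Strict Implicit. Unset Printing Implicit Defensive.

(* A simple graph is a finType V with a symmetric irreflexive relation r. *)
Section Graphs.
Variables (V : finType) (r : rel V).

Definition connected_graph : Prop := forall x y : V, connect r x y.

Definition triangle_free : Prop :=
  forall x y z : V, ~ [&& r x y, r y z & r x z].

Definition is_clique (C : {set V}) : bool :=
  [forall x in C, forall y in C, (x != y) ==> r x y].

Definition is_indep (I : {set V}) : bool :=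
  [forall x in I, forall y in I, ~~ r x y].

Definition is_maximal_indep (I : {set V}) : bool :=
  is_indep I && [forall v, (v \notin I) ==> ~~ is_indep (v |: I)].

Definition strong_clique (C : {set V}) : bool :=
  is_clique C && [forall I : {set V}, is_maximal_indep I ==> (C :&: I != set0)].

Definition localizable : Prop :=
  exists P : {set {set V}}, partition P [set: V] /\ {in P, forall C, strong_clique C}.

Definition bipartite : Prop :=
  exists A : {set V}, forall x y, r x y -> (x \in A) != (y \in A).

Definition is_edge (S : {set V}) : bool :=
  [exists x, exists y, r x y && (S == [set x; y])].

Definition is_matching (M : {set {set V}}) : bool :=
  [forall S in M, is_edge S] &&
  [forall S in M, forall S' in M, (S != S') ==> [disjoint S & S']].

Definition is_maximal_matching (M : {set {set V}}) : bool :=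
  is_matching M &&
  [forall S : {set V}, (is_edge S && (S \notin M)) ==> ~~ is_matching (S |: M)].

Definition equimatchable : Prop :=
  forall M M' : {set {set V}}, is_maximal_matching M -> is_maximal_matching M' ->
    #|M| = #|M'|.

Definition line_vertex := {S : {set V} | is_edge S}.
Definition line_rel : rel line_vertex :=
  fun a b => (a != b) && (val a :&: val b != set0).
End Graphs.

(* Main.v *)
Require Import Defs.
From mathcomp Require Import all_boot.
Set Implicit Arguments. Unset Strict Implicit. Unset Printing Implicit Defensive.

Section M.
Variables (T : finType) (e : rel T).
Hypotheses (e_sym : symmetric e) (e_irr : irreflexive e).

Definition covered (M : {set {set T}}) (t : T) := [exists S in M, t \in S].

Lemma edgeP S : reflect (exists x y, e x y /\ S = [set x; y]) (is_edge e S).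
Proof.
apply: (iffP existsP) => [[x /existsP [y /andP [exy /eqP ->]]]|[x [y [exy ->]]]].
  by exists x, y.
by exists x; apply/existsP; exists y; rewrite exy eqxx.
Qed.

Lemma edge_rel S a b : is_edge e S -> a \in S -> b \in S -> a != b -> e a b.
Proof.
move=> /edgeP [x [y [exy ->]]]; rewrite !in_set2.
case/orP=> /eqP-> ; case/orP=> /eqP->; rewrite ?eqxx //.
by rewrite e_sym.
Qed.

Lemma edge_partner S t : is_edge e S -> t \in S ->
  exists q, [/\ q \in S, q != t, e t q & S = [set t; q]].
Proof.
move=> /edgeP [x [y [exy ->]]]; rewrite in_set2.
have xy : x != y by apply: contraTneq exy => ->; rewrite e_irr.
case/orP=> /eqP->.
  by exists y; rewrite !in_set2 eqxx orbT eq_sym.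
exists x; rewrite !in_set2 eqxx xy e_sym; split=> //; apply/setP=> z.
by rewrite !in_set2 orbC.
Qed.

Lemma disjointP (A B : {set T}) : reflect (forall x, x \in A -> x \in B -> False) [disjoint A & B].
Proof.
rewrite disjoints_subset; apply: (iffP subsetP) => h x.
  by move/h; rewrite in_setC => /negP.
by move=> hA; rewrite in_setC; apply/negP; apply: h.
Qed.

Lemma matchingP (M : {set {set T}}) : reflect
  ((forall S, S \in M -> is_edge e S) /\
   (forall S S', S \in M -> S' \in M -> S != S' -> [disjoint S & S']))
  (is_matching e M).
Proof.
apply: (iffP andP) => [[/forall_inP H1 H2]|[H1 H2]]; split.
- exact: H1.
- by move=> S S' hS hS'; move/forall_inP: H2 => /(_ S hS)/forall_inP/(_ S' hS')/implyP.
- exact/forall_inP.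
- by apply/forall_inP => S hS; apply/forall_inP=> S' hS'; apply/implyP; apply: H2.
Qed.

Lemma matching_edge (M : {set {set T}}) : is_matching e M -> forall S, S \in M -> is_edge e S.
Proof. by case/matchingP. Qed.

Lemma matching_sub (M N : {set {set T}}) : N \subset M -> is_matching e M -> is_matching e N.
Proof.
move=> sNM /matchingP [H1 H2]; apply/matchingP; split.
  by move=> S /(subsetP sNM); apply: H1.
by move=> S S' /(subsetP sNM) hS /(subsetP sNM) hS'; apply: H2.
Qed.

Lemma matching_uniq (M : {set {set T}}) S S' t : is_matching e M -> S \in M -> S' \in M ->
  t \in S -> t \in S' -> S = S'.
Proof.
move=> /matchingP [_ H2] hS hS' tS tS'; apply/eqP; apply: contraT => nS.
by move: (H2 _ _ hS hS' nS) => /disjointP /(_ t tS tS').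
Qed.

Lemma coveredP (M : {set {set T}}) t : reflect (exists2 S, S \in M & t \in S) (covered M t).
Proof. exact: (iffP exists_inP). Qed.

Lemma cov_add (M : {set {set T}}) a b t : covered ([set a; b] |: M) t = (t == a) || (t == b) || covered M t.
Proof.
apply/coveredP/idP => [[S]|].
  rewrite in_setU1 => /orP [/eqP-> |hS ht]; first by rewrite in_set2 => ->.
  by rewrite orbC; apply/orP; left; apply/coveredP; exists S.
case/orP => [ht|/coveredP [S hS ht]].
  by exists [set a; b]; rewrite ?setU11 // in_set2.
by exists S; rewrite // in_setU1 hS orbT.
Qed.

Lemma cov_sub (M N : {set {set T}}) t : N \subset M -> covered N t -> covered M t.
Proof. by move=> sNM /coveredP [S hS ht]; apply/coveredP; exists S => //; apply: (subsetP sNM). Qed.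

Lemma cov_del (M : {set {set T}}) S t : is_matching e M -> S \in M -> t \in S -> ~~ covered (M :\ S) t.
Proof.
move=> hM hS ht; apply/coveredP => [[S']]; rewrite in_setD1 => /andP [nS hS'] ht'.
by move: nS; rewrite (matching_uniq hM hS' hS ht' ht) eqxx.
Qed.

Lemma matching_add (M : {set {set T}}) a b : is_matching e M -> e a b -> ~~ covered M a -> ~~ covered M b ->
  is_matching e ([set a; b] |: M) /\ #|[set a; b] |: M| = #|M|.+1.
Proof.
move=> /matchingP [H1 H2] eab na nb.
have nin : [set a; b] \notin M.
  apply: contra na => h; apply/coveredP; exists [set a; b] => //.
  by rewrite in_set2 eqxx.
suff hm : is_matching e ([set a; b] |: M) by split; rewrite // cardsU1 nin.
have disj S : S \in M -> [disjoint [set a; b] & S].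
  move=> hS; apply/disjointP => z; rewrite in_set2 => /orP [] /eqP -> hz.
    by case/negP: na; apply/coveredP; exists S.
  by case/negP: nb; apply/coveredP; exists S.
apply/matchingP; split.
  move=> S; rewrite in_setU1 => /orP [/eqP->|]; last exact: H1.
  by apply/edgeP; exists a, b.
move=> S S'; rewrite !in_setU1 => /orP [/eqP->|hS] /orP [/eqP->|hS']; rewrite ?eqxx //.
- by move=> _; apply: disj.
- by move=> _; rewrite disjoint_sym; apply: disj.
- exact: H2.
Qed.

Lemma maximal_cover (M : {set {set T}}) a b : is_maximal_matching e M -> e a b -> covered M a || covered M b.
Proof.
move=> /andP [hM /forallP hmax] eab; apply: contraT; rewrite negb_or => /andP [na nb].
have [hM' _] := matching_add hM eab na nb.
move: (hmax [set a; b]); rewrite hM' /= implybF negb_and negbK => /orP [].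
  by case/negP; apply/edgeP; exists a, b.
by move=> h; case/negP: na; apply/coveredP; exists [set a; b]; rewrite // in_set2 eqxx.
Qed.

Lemma cover_maximal (M : {set {set T}}) : is_matching e M -> (forall a b, e a b -> covered M a || covered M b) ->
  is_maximal_matching e M.
Proof.
move=> hM hc; rewrite /is_maximal_matching hM /=; apply/forallP => S; apply/implyP.
case/andP => /edgeP [a [b [eab ->]]] nin; apply/negP => /matchingP [_ H2].
have: covered M a || covered M b by apply: hc.
case/orP => /coveredP [S' hS' hx];
  (have nS : [set a; b] != S' by apply: contraNneq nin => ->);
  (have hS'' : S' \in [set a; b] |: M by rewrite in_setU1 hS' orbT);
  move: (H2 _ _ (setU11 _ _) hS'' nS) => /disjointP.
  by move/(_ a); rewrite in_set2 eqxx; apply.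
by move/(_ b); rewrite in_set2 eqxx orbT; apply.
Qed.

Lemma extend_matching (N : {set {set T}}) : is_matching e N -> exists N' : {set {set T}}, N \subset N' /\ is_maximal_matching e N'.
Proof.
move: {2}#|~: N| (leqnn #|~: N|) => n; elim: n N => [|n IH] N hn hN.
  exists N; split=> //; rewrite /is_maximal_matching hN; apply/forallP=> S; apply/implyP.
  case/andP=> _ nS; move: hn; rewrite leqn0 cards_eq0 => /eqP h.
  by move: h => /setP /(_ S); rewrite in_setC (negbTE nS) in_set0.
case hm: (is_maximal_matching e N); first by exists N.
move: hm; rewrite /is_maximal_matching hN /= => /negbT; rewrite negb_forall => /existsP [S].
rewrite negb_imply negbK => /andP [/andP [_ nS] hSN].
have [N' [s1 s2]] : exists N' : {set {set T}}, S |: N \subset N' /\ is_maximal_matching e N'.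
  apply: IH => //; rewrite setCU -ltnS; apply: leq_trans hn.
  rewrite (cardsD1 S (~: N)) in_setC nS add1n ltnS; apply: subset_leq_card.
  by apply/subsetP => z; rewrite !inE; case/andP=> -> ->.
by exists N'; split => //; apply: subset_trans s1; apply: subsetUr.
Qed.

Lemma same_size_maximal (M N : {set {set T}}) : equimatchable e -> is_maximal_matching e M -> is_matching e N ->
  #|N| = #|M| -> is_maximal_matching e N.
Proof.
move=> eqm hM hN hc; have [N' [s1 s2]] := extend_matching hN.
have := eqm _ _ hM s2; rewrite -hc => hc'.
suff -> : N = N' by [].
by apply/eqP; rewrite eqEcard s1 hc' leqnn.
Qed.


Lemma free_del (M : {set {set T}}) S t : ~~ covered M t -> ~~ covered (M :\ S) t.
Proof. by apply: contra; apply: cov_sub; apply: subsetDl. Qed.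

Lemma neq_cov (M : {set {set T}}) t y : covered M t -> ~~ covered M y -> y != t.
Proof. by move=> ht; apply: contraNneq => ->. Qed.

Lemma swap_max (M : {set {set T}}) S a b : equimatchable e -> is_maximal_matching e M -> S \in M -> e a b ->
  ~~ covered (M :\ S) a -> ~~ covered (M :\ S) b ->
  is_maximal_matching e ([set a; b] |: (M :\ S)).
Proof.
move=> eqm hM hS eab na nb.
have hM' : is_matching e (M :\ S) by apply: matching_sub (andP hM).1; apply: subsetDl.
have [h1 h2] := matching_add hM' eab na nb.
apply: same_size_maximal eqm hM h1 _.
by rewrite h2 (cardsD1 S M) hS.
Qed.

Section Side.
Variable A : {set T}.
Hypothesis hA : forall u v, e u v -> (u \in A) != (v \in A).
Hypothesis eqm : equimatchable e.

Lemma sideN u v : e u v -> u \in A -> v \notin A.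
Proof. by move=> /hA; case: (u \in A); case: (v \in A). Qed.
Lemma sideP u v : e u v -> u \notin A -> v \in A.
Proof. by move=> /hA; case: (u \in A); case: (v \in A). Qed.
Lemma side_neq u v : u \in A -> v \notin A -> v != u.
Proof. by move=> hu; apply: contraNneq => ->. Qed.

Lemma walk n : forall (M : {set {set T}}) x p, size p <= n -> is_maximal_matching e M ->
  x \in A -> ~~ covered M x -> path e x p -> last x p \notin A -> ~~ covered M (last x p) -> False.
Proof.
elim: n => [|n IH] M x [|p1 [|p2 rest]] //=.
- by move=> _ _ ->.
- by move=> _ _ ->.
- by move=> _ hM _ nx; rewrite andbT => exp1 _ np1; move: (maximal_cover hM exp1); rewrite (negbTE nx) (negbTE np1).
move=> hsz hM xA nx /and3P [exp1 ep1p2 hpath].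
set y := last p2 rest => yA ny.
have hMm := (andP hM).1.
have p1A : p1 \notin A by apply: sideN exp1 xA.
have p2A : p2 \in A by apply: sideP ep1p2 p1A.
have hsz' : size rest <= n by rewrite -ltnS (leq_trans _ hsz).
have cp1 : covered M p1 by move: (maximal_cover hM exp1); rewrite (negbTE nx).
case/coveredP: cp1 => S1 hS1 p1S1.
have [q [qS1 qp1 ep1q defS1]] := edge_partner ((matching_edge hMm) _ hS1) p1S1.
have qA : q \in A by apply: sideP ep1q p1A.
have cq : covered M q by apply/coveredP; exists S1.
have cp1 : covered M p1 by apply/coveredP; exists S1.
have yx : y != x by apply: side_neq.
have yp1 : y != p1 by apply: neq_cov cp1 ny.
have nx1 : ~~ covered (M :\ S1) x by apply: free_del.
have np11 : ~~ covered (M :\ S1) p1 by apply: cov_del.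
have hM1 := swap_max eqm hM hS1 exp1 nx1 np11.
set M1 := [set x; p1] |: (M :\ S1) in hM1.
have nq1 : ~~ covered M1 q.
  rewrite /M1 cov_add (eq_sym q x) (negbTE (neq_cov cq nx)) (negbTE qp1) /=.
  by apply: cov_del.
have ny1 : ~~ covered M1 y.
  by rewrite /M1 cov_add (negbTE yx) (negbTE yp1) /=; apply: free_del.
case cp2 : (covered M p2); last first.
  by apply: (IH M p2 rest) => //; rewrite cp2.
case/coveredP: cp2 => S2 hS2 p2S2.
have [r [rS2 rp2 ep2r defS2]] := edge_partner ((matching_edge hMm) _ hS2) p2S2.
have rA : r \notin A by apply: sideN ep2r p2A.
have cr : covered M r by apply/coveredP; exists S2.
have cp2 : covered M p2 by apply/coveredP; exists S2.
have yr : y != r by apply: neq_cov cr ny.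
case: (eqVneq S1 S2) => [eS|nS].
  have p2q : p2 = q.
    move: p2S2; rewrite -eS defS1 in_set2 => /orP [/eqP e1|/eqP //].
    by move: p2A; rewrite e1 (negbTE p1A).
  apply: (IH M1 p2 rest) => //.
    by move: nq1; rewrite p2q.
have hS2' : S2 \in M :\ S1 by rewrite in_setD1 eq_sym nS.
have hMd1 : is_matching e (M :\ S1) by apply: matching_sub hMm; apply: subsetDl.
have np12 : ~~ covered (M :\ S1 :\ S2) p1 by apply: free_del.
have np22 : ~~ covered (M :\ S1 :\ S2) p2 by apply: cov_del.
have hMd2 : is_matching e (M :\ S1 :\ S2) by apply: matching_sub hMd1; apply: subsetDl.
have [hM2 cM2] := matching_add hMd2 ep1p2 np12 np22.
set M2 := [set p1; p2] |: (M :\ S1 :\ S2) in hM2 cM2.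
have cardM : #|M| = #|M2|.+1.
  by rewrite cM2 (cardsD1 S1 M) hS1 (cardsD1 S2 (M :\ S1)) hS2'.
have free_char t : ~~ covered M2 t -> [|| ~~ covered M t, t == q | t == r].
  move=> nt; case ct : (covered M t) => //=.
  case/coveredP: ct => S hS tS.
  case: (eqVneq S S1) => [eS1|nS1].
    move: tS; rewrite eS1 defS1 in_set2 => /orP [/eqP et|-> //].
    by move: nt; rewrite /M2 cov_add et eqxx.
  case: (eqVneq S S2) => [eS2|nS2].
    move: tS; rewrite eS2 defS2 in_set2 => /orP [/eqP et|->]; last by rewrite orbT.
    by move: nt; rewrite /M2 cov_add et eqxx orbT.
  move: nt; rewrite /M2 cov_add; case/norP => _; case/negP.
  by apply/coveredP; exists S => //; rewrite !in_setD1 nS1 nS2.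
have caseQ b : e q b -> ~~ covered M b -> False.
  move=> eqb nb.
  have bA : b \notin A by apply: sideN eqb qA.
  have nb1 : ~~ covered M1 b.
    rewrite /M1 cov_add (negbTE (side_neq xA bA)) (negbTE (neq_cov cp1 nb)) /=.
    by apply: free_del.
  by move: (maximal_cover hM1 eqb); rewrite (negbTE nq1) (negbTE nb1).
have caseR b : e r b -> ~~ covered M b -> False.
  move=> erb nb.
  have bA : b \in A by apply: sideP erb rA.
  have nb3 : ~~ covered (M :\ S2) b by apply: free_del.
  have nr3 : ~~ covered (M :\ S2) r by apply: cov_del.
  have ebr : e b r by rewrite e_sym.
  have hM3 := swap_max eqm hM hS2 ebr nb3 nr3.
  apply: (IH _ p2 rest hsz' hM3) => //.
    rewrite cov_add (eq_sym p2 b) (negbTE (neq_cov cp2 nb)) (eq_sym p2 r) (negbTE rp2) /=.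
    exact: cov_del hMm hS2 p2S2.
  rewrite -/y cov_add (negbTE (side_neq bA yA)) (negbTE yr) /=.
  exact: free_del.
have caseQR : e q r -> False.
  move=> eqr.
  have hS2M1 : S2 \in M1 by rewrite /M1 in_setU1 hS2' orbT.
  have hM1m := (andP hM1).1.
  have nq4 : ~~ covered (M1 :\ S2) q by apply: free_del.
  have nr4 : ~~ covered (M1 :\ S2) r by apply: cov_del hM1m hS2M1 rS2.
  have hM4 := swap_max eqm hM1 hS2M1 eqr nq4 nr4.
  have p2q : p2 != q.
    apply/negP => /eqP e2; move: nS; rewrite (matching_uniq hMm hS1 hS2 qS1 (_ : q \in S2)) ?eqxx //.
    by rewrite -e2.
  apply: (IH _ p2 rest hsz' hM4) => //.
    rewrite cov_add (negbTE p2q) (eq_sym p2 r) (negbTE rp2) /=.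
    exact: cov_del hM1m hS2M1 p2S2.
  rewrite -/y cov_add (negbTE (neq_cov cq ny)) (negbTE yr) /=.
  exact: free_del.
have hM2max : is_maximal_matching e M2.
  apply: (@cover_maximal M2 hM2) => a b eab; apply: contraT; rewrite negb_or => /andP [na nb].
  case/or3P: (free_char a na) => [fa|/eqP ea|/eqP ea]; case/or3P: (free_char b nb) => [fb|/eqP eb|/eqP eb].
  - by move: (maximal_cover hM eab); rewrite (negbTE fa) (negbTE fb).
  - by case: (caseQ a) => //; rewrite -eb e_sym.
  - by case: (caseR a) => //; rewrite -eb e_sym.
  - by case: (caseQ b) => //; rewrite -ea.
  - by move: eab; rewrite ea eb e_irr.
  - by case: caseQR; rewrite -ea -eb.
  - by case: (caseR b) => //; rewrite -ea.
  - by case: caseQR; rewrite -ea -eb e_sym.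
  - by move: eab; rewrite ea eb e_irr.
have E := eqm hM hM2max.
by move: E; rewrite cardM => /eqP; rewrite eqn_leq ltnn.
Qed.

Lemma cover_side (M : {set {set T}}) : connected_graph e -> is_maximal_matching e M ->
  (forall a, a \in A -> covered M a) \/ (forall b, b \notin A -> covered M b).
Proof.
move=> hc hM.
case: (boolP [exists a, (a \in A) && ~~ covered M a]) => [/existsP [a /andP [aA na]]|h1]; last first.
  left => a aA; apply: contraT => na; case/negP: h1; apply/existsP; exists a; by rewrite aA.
case: (boolP [exists b, (b \notin A) && ~~ covered M b]) => [/existsP [b /andP [bA nb]]|h2]; last first.
  right => b bA; apply: contraT => nb; case/negP: h2; apply/existsP; exists b; by rewrite bA.
exfalso; case/connectP: (hc a b) => p hp eb.
by apply: (walk (leqnn (size p)) hM aA na hp); rewrite -eb.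
Qed.

Lemma card_CA (M : {set {set T}}) : is_matching e M -> #|[set t in A | covered M t]| = #|M|.
Proof.
move=> hM.
pose phi t := [pick S in M | t \in S].
have phiP t : covered M t -> exists2 S, phi t = Some S & (S \in M) && (t \in S).
  rewrite /phi; case: pickP => [S hS _|h]; first by exists S.
  by case/coveredP => S hS tS; move: (h S); rewrite hS tS.
have inj : {in [set t in A | covered M t] &, injective phi}.
  move=> t1 t2; rewrite !inE => /andP [t1A c1] /andP [t2A c2] eq12.
  have [S1 h1 /andP [hS1 t1S1]] := phiP _ c1.
  have [S2 h2 /andP [hS2 t2S2]] := phiP _ c2.
  move: eq12; rewrite h1 h2 => [[eS]]; move: t2S2; rewrite -eS => t2S1.
  apply/eqP; apply: contraT => n12.
  have := edge_rel (matching_edge hM hS1) t1S1 t2S1 n12.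
  by move/hA; rewrite t1A t2A.
rewrite -(card_in_imset inj).
suff -> : phi @: [set t in A | covered M t] = Some @: M by apply: card_imset; apply: Some_inj.
apply/setP => o; apply/imsetP/imsetP.
  case=> t; rewrite inE => /andP [_ ct] ->.
  by have [S -> /andP [hS _]] := phiP _ ct; exists S.
case=> S hS ->.
case/edgeP: (matching_edge hM hS) => x [y [exy defS]].
have [t [tA tS]] : exists t, t \in A /\ t \in S.
  case xA : (x \in A); first by exists x; rewrite defS in_set2 eqxx.
  exists y; rewrite defS in_set2 eqxx orbT; split => //.
  by move: (hA exy); rewrite xA; case: (y \in A).
have ct : covered M t by apply/coveredP; exists S.
exists t; first by rewrite inE tA ct.
have [S' -> /andP [hS' tS']] := phiP _ ct.
by rewrite (matching_uniq hM hS' hS tS' tS).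
Qed.

Lemma all_cover (M M' : {set {set T}}) : is_maximal_matching e M -> is_maximal_matching e M' ->
  (forall a, a \in A -> covered M a) -> forall a, a \in A -> covered M' a.
Proof.
move=> hM hM' hc.
have e1 : [set t in A | covered M t] = A.
  by apply/setP => t; rewrite inE; case tA: (t \in A) => //=; apply: hc.
have cM := card_CA (andP hM).1; rewrite e1 in cM.
have cM' := card_CA (andP hM').1.
have e2 : [set t in A | covered M' t] = A.
  apply/eqP; rewrite eqEcard cM' -(eqm hM hM') cM leqnn andbT.
  by apply/subsetP => t; rewrite inE => /andP [].
by move=> a aA; move: aA; rewrite -e2 inE => /andP [].
Qed.

End Side.

Notation LV := (line_vertex e).
Notation lr := (@line_rel T e).

Definition IM (M : {set {set T}}) : {set LV} := [set v | val v \in M].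
Definition MI (I : {set LV}) : {set {set T}} := [set val v | v in I].

Lemma indepP (I : {set LV}) : reflect (forall x y, x \in I -> y \in I -> ~~ lr x y) (is_indep lr I).
Proof.
apply: (iffP forall_inP) => [h x y hx hy|h x hx].
  by move/forall_inP: (h x hx) => /(_ y hy).
by apply/forall_inP => y hy; apply: h.
Qed.

Lemma lrP (v w : LV) : reflect (v != w /\ exists z, z \in val v /\ z \in val w) (lr v w).
Proof.
rewrite /line_rel; apply: (iffP andP) => [[h1 /set0Pn [z]]|[h1 [z [z1 z2]]]].
  by rewrite inE => /andP [z1 z2]; split => //; exists z.
by split => //; apply/set0Pn; exists z; rewrite inE z1.
Qed.

Lemma lr_irr (v : LV) : lr v v = false.
Proof. by rewrite /line_rel eqxx. Qed.

Lemma IM_card (M : {set {set T}}) : is_matching e M -> #|IM M| = #|M|.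
Proof.
move=> hM; suff h : val @: IM M = M by rewrite -[in RHS]h card_imset //; exact: val_inj.
apply/setP => S; apply/imsetP/idP => [[v]|hS].
  by rewrite inE => hv ->.
by exists (exist _ S (matching_edge hM hS)); rewrite ?inE.
Qed.

Lemma IM_maximal (M : {set {set T}}) : is_maximal_matching e M -> is_maximal_indep lr (IM M).
Proof.
move=> hM; have hMm := (andP hM).1.
have hind : is_indep lr (IM M).
  apply/indepP => x y; rewrite !inE => hx hy; apply/lrP => [[nxy [z [z1 z2]]]].
  have exy : val x = val y by apply: matching_uniq hMm hx hy z1 z2.
  by move: nxy; rewrite (val_inj exy) eqxx.
rewrite /is_maximal_indep hind /=; apply/forallP => v; apply/implyP; rewrite inE => nv.
apply/negP => /indepP hi.
case/edgeP: (valP v) => a [b [eab dv]].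
have: covered M a || covered M b by apply: maximal_cover.
have cw z : z \in val v -> covered M z -> False.
  move=> zv /coveredP [S hS zS].
  pose w : LV := exist _ S (matching_edge hMm hS).
  have hw : w \in v |: IM M by rewrite in_setU1 inE hS orbT.
  move: (hi v w (setU11 _ _) hw); apply/negP/negPn/lrP; split; last by exists z.
  by apply: contraNneq nv => ->.
by case/orP; apply: cw; rewrite dv in_set2 eqxx ?orbT.
Qed.

Lemma MI_matching (I : {set LV}) : is_indep lr I -> is_matching e (MI I).
Proof.
move=> /indepP hI; apply/matchingP; split.
  by move=> S /imsetP [v _ ->]; apply: valP.
move=> S S' /imsetP [v hv ->] /imsetP [w hw ->] nvw; apply/disjointP => z z1 z2.
move: (hI v w hv hw); apply/negP/negPn/lrP; split; last by exists z.
by apply: contraNneq nvw => ->.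
Qed.

Lemma MI_maximal (I : {set LV}) : is_maximal_indep lr I -> is_maximal_matching e (MI I).
Proof.
case/andP => hind /forallP hmax.
apply: cover_maximal (MI_matching hind) _ => a b eab.
have eS : is_edge e [set a; b] by apply/edgeP; exists a, b.
pose v : LV := exist _ [set a; b] eS.
case vI : (v \in I).
  by apply/orP; left; apply/coveredP; exists (val v); [apply: imset_f | rewrite in_set2 eqxx].
move: (hmax v); rewrite vI /= => hn.
have key w : w \in I -> (exists z, z \in val v /\ z \in val w) -> covered (MI I) a || covered (MI I) b.
  move=> hw [z [z1 z2]].
  have cz : covered (MI I) z by apply/coveredP; exists (val w) => //; apply: imset_f.
  by move: z1; rewrite /= in_set2 => /orP [] /eqP <-; rewrite cz ?orbT.
case: (boolP [exists x in v |: I, exists y in v |: I, lr x y]) => [/exists_inP [x hx /exists_inP [y hy hxy]]|hno]; last first.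
  case/negP: hn; apply/indepP => x y hx hy; apply/negP => hxy; case/negP: hno.
  by apply/exists_inP; exists x => //; apply/exists_inP; exists y.
move: hx hy; rewrite !in_setU1 => /orP [/eqP ex|hx] /orP [/eqP ey|hy].
- by move: hxy; rewrite ex ey lr_irr.
- by apply: (key y hy); move: hxy; rewrite ex => /lrP [_].
- apply: (key x hx); move: hxy; rewrite ey => /lrP [_ [z [z1 z2]]].
  by exists z.
- by move/indepP: hind => /(_ x y hx hy); rewrite hxy.
Qed.


Lemma clique_of (C : {set LV}) v w : is_clique lr C -> v \in C -> w \in C -> v != w -> lr v w.
Proof.
by move=> /forall_inP h hv hw nvw; move/forall_inP: (h v hv) => /(_ w hw) /implyP; apply.
Qed.

Lemma loc_to_be : triangle_free e -> localizable lr -> bipartite e /\ equimatchable e.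
Proof.
move=> H_tf [P [hpart hstrong]].
case/and3P: hpart => /eqP hcov htriv hnz.
have inP v : pblock P v \in P by apply: pblock_mem; rewrite hcov in_setT.
have memP v : v \in pblock P v by rewrite mem_pblock hcov in_setT.
have center_ex C : C \in P -> exists c, forall v, v \in C -> c \in val v.
  move=> hC; have /andP [hcl _] := hstrong C hC.
  have /set0Pn [v0 hv0] : C != set0 by apply: contraNneq hnz => <-.
  case/edgeP: (valP v0) => x [y [exy dv0]].
  case: (boolP [forall v in C, x \in val v]) => [/forall_inP h|]; first by exists x.
  case: (boolP [forall v in C, y \in val v]) => [/forall_inP h|]; first by exists y.
  rewrite !negb_forall_in => /exists_inP [w2 hw2 nyw2] /exists_inP [w1 hw1 nxw1].
  have xv0 : x \in val v0 by rewrite dv0 in_set2 eqxx.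
  have yv0 : y \in val v0 by rewrite dv0 in_set2 eqxx orbT.
  have yw1 : y \in val w1.
    have n01 : v0 != w1 by apply: contraNneq nxw1 => <-.
    case/lrP: (clique_of hcl hv0 hw1 n01) => _ [z [z1 z2]].
    move: z1; rewrite dv0 in_set2 => /orP [] /eqP ez; move: z2; rewrite ez //.
    by rewrite (negbTE nxw1).
  have xw2 : x \in val w2.
    have n02 : v0 != w2 by apply: contraNneq nyw2 => <-.
    case/lrP: (clique_of hcl hv0 hw2 n02) => _ [z [z1 z2]].
    move: z1; rewrite dv0 in_set2 => /orP [] /eqP ez; move: z2; rewrite ez //.
    by rewrite (negbTE nyw2).
  have n12 : w1 != w2 by apply: contraNneq nxw1 => ->.
  case/lrP: (clique_of hcl hw1 hw2 n12) => _ [z [z1 z2]].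
  have zx : z != x by apply: contraNneq nxw1 => <-.
  have zy : z != y by apply: contraNneq nyw2 => <-.
  have eyz : e y z by apply: (edge_rel (valP w1)) => //; rewrite eq_sym.
  have exz : e x z by apply: (edge_rel (valP w2)) => //; rewrite eq_sym.
  by exfalso; apply: (H_tf x y z); rewrite exy eyz exz.
pose center (C : {set LV}) := [pick c | [forall v in C, c \in val v]].
have centerP C : C \in P -> exists2 c, center C = Some c & forall v, v \in C -> c \in val v.
  move=> hC; rewrite /center; case: pickP => [c /forall_inP h|hn]; first by exists c.
  have [c hc] := center_ex C hC.
  by move: (hn c) => /negbT /negP; case; apply/forall_inP.
pose A := [set c | [exists C in P, center C == Some c]].
have K2 C c f : C \in P -> center C = Some c -> f \notin C -> c \notin val f.
  move=> hC hc nf; apply/negP => cf.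
  have [c' [ec' hc'C]] : exists c', Some c = Some c' /\ forall v, v \in C -> c' \in val v.
    by have [c' e1 h] := centerP C hC; exists c'; rewrite -hc e1.
  have hm1 : is_matching e [set val f].
    apply/matchingP; split; first by move=> S; rewrite in_set1 => /eqP ->; apply: valP.
    by move=> S S'; rewrite !in_set1 => /eqP -> /eqP ->; rewrite eqxx.
  have [M [sM hM]] := extend_matching hm1.
  have hI := IM_maximal hM.
  have fI : f \in IM M by rewrite inE (subsetP sM) // in_set1.
  have /andP [_ /forallP hs] := hstrong C hC.
  move: (hs (IM M)); rewrite hI /= => /set0Pn [g]; rewrite inE => /andP [gC gI].
  move/indepP: (andP hI).1 => /(_ f g fI gI) /negP; apply; apply/lrP; split.
    by apply: contraNneq nf => ->.
  by case: ec' => ecc; subst c'; exists c; split => //; apply: hc'C.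
split.
  exists A => x y exy.
  have eS : is_edge e [set x; y] by apply/edgeP; exists x, y.
  pose v : LV := exist _ [set x; y] eS.
  have [c hc hcv] := centerP _ (inP v).
  have cA : c \in A by rewrite inE; apply/exists_inP; exists (pblock P v) => //; rewrite hc.
  have notA u : u \in val v -> u != c -> u \notin A.
    move=> uv uc; rewrite inE; apply/negP => /exists_inP [C' hC' /eqP hc'].
    case: (eqVneq C' (pblock P v)) => [eC|nC].
      by move: hc'; rewrite eC hc => [[ecu]]; move: uc; rewrite ecu eqxx.
    apply: (negP (K2 C' u v hC' hc' _)) => //.
    by apply: contra nC => vC; rewrite (def_pblock htriv hC' vC).
  have xy : x != y by apply: contraTneq exy => ->; rewrite e_irr.
  have := hcv v (memP v); rewrite /= in_set2 => /orP [] /eqP ec.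
    subst c; rewrite cA (negbTE (notA y _ _)) //; first by rewrite /= in_set2 eqxx orbT.
    by rewrite eq_sym.
  subst c; rewrite cA (negbTE (notA x _ _)) //; first by rewrite /= in_set2 eqxx.
have cardI I : is_maximal_indep lr I -> #|I| = #|P|.
  move=> hI; have hind := (andP hI).1.
  have inj : {in I &, injective (pblock P)}.
    move=> v w hv hw epb; apply/eqP; apply: contraT => nvw.
    have /andP [hcl _] := hstrong _ (inP w).
    have vw : v \in pblock P w by rewrite -epb.
    by move/indepP: hind => /(_ v w hv hw); rewrite (clique_of hcl vw (memP w) nvw).
  rewrite -(card_in_imset inj); congr (#|pred_of_set _|).
  apply/setP => C; apply/imsetP/idP => [[v hv ->] //|hC].
  have /andP [_ /forallP hs] := hstrong C hC.
  move: (hs I); rewrite hI /= => /set0Pn [g]; rewrite inE => /andP [gC gI].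
  by exists g => //; rewrite (def_pblock htriv hC gC).
move=> M M' hM hM'.
by rewrite -(IM_card (andP hM).1) -(IM_card (andP hM').1) !cardI //; apply: IM_maximal.
Qed.

Lemma be_to_loc : connected_graph e -> bipartite e -> equimatchable e -> localizable lr.
Proof.
move=> hc [A hA] eqm.
have hm0 : is_matching e set0.
  by apply/matchingP; split => [S|S S']; rewrite in_set0.
have [M0 [_ hM0]] := extend_matching hm0.
have [X [hX hcovX]] : exists X : {set T}, (forall u v, e u v -> (u \in X) != (v \in X)) /\
    forall M, is_maximal_matching e M -> forall a, a \in X -> covered M a.
  case: (cover_side hA eqm hc hM0) => hcov.
    by exists A; split => // M hM a aA; apply: (all_cover hA eqm hM0 hM hcov aA).
  have hA' : forall u v, e u v -> (u \in ~: A) != (v \in ~: A).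
    by move=> u v /hA; rewrite !in_setC; case: (u \in A); case: (v \in A).
  exists (~: A); split => // M hM a aA; apply: (all_cover hA' eqm hM0 hM _ aA).
  by move=> b; rewrite in_setC; apply: hcov.
pose f (v : LV) := [pick x in val v | x \in X].
have fP v a : f v = Some a -> a \in val v /\ a \in X.
  by rewrite /f; case: pickP => [x /andP [xv xX] [<-]|_] //.
have f_uniq (v : LV) a : a \in val v -> a \in X -> f v = Some a.
  rewrite /f; case: pickP => [x /andP [xv xX]|hn] av aX.
    congr Some; apply/eqP; apply: contraT => nxa.
    by have := hX _ _ (edge_rel (valP v) xv av nxa); rewrite xX aX.
  by move: (hn a); rewrite av aX.
have f_ex (v : LV) : exists a, f v = Some a.
  case/edgeP: (valP v) => x [y [exy dv]].
  case xX : (x \in X).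
    by exists x; apply: f_uniq => //; rewrite dv in_set2 eqxx.
  exists y; apply: f_uniq; first by rewrite dv in_set2 eqxx orbT.
  by move: (hX _ _ exy); rewrite xX; case: (y \in X).
exists (preim_partition f setT); split; first exact: preim_partitionP.
move=> B /imsetP [u _ ->].
have [a fa] := f_ex u; have [au aX] := fP _ _ fa.
apply/andP; split.
  apply/forall_inP => v; rewrite !inE /= => /eqP fv; apply/forall_inP => w; rewrite !inE /= => /eqP fw.
  apply/implyP => nvw; apply/lrP; split => //; exists a; split.
    by case: (fP v a) => //; rewrite -fv fa.
  by case: (fP w a) => //; rewrite -fw fa.
apply/forallP => I; apply/implyP => hI.
have hM := MI_maximal hI.
case/coveredP: (hcovX _ hM a aX) => S /imsetP [w wI ->] aw.
by apply/set0Pn; exists w; rewrite !inE wI andbT fa (f_uniq w a aw aX) eqxx.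
Qed.
End M.

Theorem mainTheorem18 (T : finType) (e : rel T)
    (e_sym : symmetric e) (e_irr : irreflexive e)
    (H_conn : connected_graph e) (H_tf : triangle_free e) :
  localizable (@line_rel T e) <-> (bipartite e /\ equimatchable e).
Proof.
split; first exact: loc_to_be e_sym e_irr H_tf.
by case=> hb heq; apply: be_to_loc.
Qed.
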